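(* For the RHA process and every $j\ge1$, $$\inf_{n\in\mathbb N}2^{-n}H(X^n_j)=h,\qquad\text{where } h:=\inf_{l\in\mathbb N}2^{-l}\log k_l=\lim_{l\to\infty}2^{-l}\log k_l.$$
   Context: Random hierarchical association (RHA) process. Fix positive integers $(k_n)_{n\ge0}$ (perplexities) with $k_{n-1}\le k_n\le k_{n-1}^2$ for all $n\ge1$. On a probability space $(\Omega,\mathcal J,P)$ let, for each $n\ge1$, $(L_{nj},R_{nj})_{j=1}^{k_n}$ be the lexicographically sorted enumeration of a uniformly random $k_n$-element subset of $\{1,\dots,k_{n-1}\}^2$ (each of the $\binom{k_{n-1}^2}{k_n}$ subsets equally likely), independently over $n$. Let $(C_n)_{n\ge0}$ be independent, independent of all $(L_{nj},R_{nj})$, with $C_n$ uniform on $\{1,\dots,k_n\}$. Define strings $Y^0_j=j$ (length 1) for $1\le j\le k_0$ and $Y^n_j=Y^{n-1}_{L_{nj}}Y^{n-1}_{R_{nj}}$ (concatenation). The RHA process is $\mathcal X=Y^0_{C_0}Y^1_{C_1}Y^2_{C_2}\cdots=X_1X_2X_3\cdots$, $X_{k:l}=X_k\cdots X_l$; for $n\ge0$, $j\ge1$, $X^n_j=X_{j2^n:(j+1)2^n-1}$. $H(X)=\mathbb E_P[-\log P(X)]$ with natural logarithm. The quantity $h$ is called the combinatorial entropy rate. *)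

(* Defs.v *)
From Stdlib Require Import Reals.
From mathcomp Require Import all_boot.
Set Implicit Arguments.
Unset Strict Implicit.
Unset Printing Implicit Defensive.

Definition lexle (p q : nat * nat) : bool :=
  (p.1 < q.1) || ((p.1 == q.1) && (p.2 <= q.2)).

Definition lexenum (a : nat) (A : {set 'I_a * 'I_a}) : seq (nat * nat) :=
  sort lexle [seq (nat_of_ord x.1, nat_of_ord x.2) | x <- enum A].

(* Level i >= 1: all k_i-element subsets of {0..k_{i-1}-1}^2 (one list entry
   per subset, so the uniform weight on entries = uniform law on subsets),
   each given by its lexicographically sorted enumeration (L_ij, R_ij)_j. *)
Definition level_outcomes (k : nat -> nat) (i : nat) : seq (seq (nat * nat)) :=
  [seq lexenum A | A <- enum [set A : {set 'I_(k i.-1) * 'I_(k i.-1)} | #|A| == k i]].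

Definition prod_lists (A : Type) (ls : seq (seq A)) : seq (seq A) :=
  foldr (fun l acc => [seq x :: y | x <- l, y <- acc]) [:: [::]] ls.

(* An outcome of the process truncated at level M:
   (list of level-1..M enumerations, list of C_0..C_M). *)
Definition outcome := (seq (seq (nat * nat)) * seq nat)%type.

(* Finite product sample space, uniform (each entry equally likely). *)
Definition Omega (k : nat -> nat) (M : nat) : seq outcome :=
  [seq (s, c) | s <- prod_lists [seq level_outcomes k i | i <- iota 1 M],
                c <- prod_lists [seq iota 0 (k i) | i <- iota 0 M.+1]].

(* Y^n_j (0-based index j, symbols 0..k_0-1); Ls = level-1,2,... data. *)
Fixpoint Ystr (Ls : seq (seq (nat * nat))) (n j : nat) : seq nat :=
  match n with
  | 0 => [:: j]
  | n'.+1 => let p := nth (0, 0) (nth [::] Ls n') j in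
             Ystr Ls n' p.1 ++ Ystr Ls n' p.2
  end.

(* X_{1 : 2^(M+1)-1} = Y^0_{C_0} Y^1_{C_1} ... Y^M_{C_M}. *)
Definition Xprefix (M : nat) (w : outcome) : seq nat :=
  flatten [seq Ystr w.1 i (nth 0 w.2 i) | i <- iota 0 M.+1].

(* X^n_j = X_{j 2^n : (j+1) 2^n - 1} (1-based positions t, entry t-1). *)
Definition Xblock (M n j : nat) (w : outcome) : seq nat :=
  [seq nth 0 (Xprefix M w) t.-1 | t <- iota (j * 2 ^ n) (2 ^ n)].

(* H(X) = E[-log P(X)] for X = f on the uniform finite space Om. *)
Definition entropy (A : eqType) (Om : seq outcome) (f : outcome -> A) : R :=
  foldr Rplus R0 [seq
     Rmult (Rinv (INR (size Om)))
       (Ropp (ln (Rdiv (INR (count (fun w' => f w' == f w) Om)) (INR (size Om)))))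
   | w <- Om].

(* H(X^n_j): its law is computed on the truncation at level M = n + j,
   which contains the whole block since (j+1) 2^n <= 2^(n+j+1). *)
Definition H_block (k : nat -> nat) (n j : nat) : R :=
  entropy (Omega k (n + j)) (Xblock (n + j) n j).

Definition is_inf (E : R -> Prop) (m : R) : Prop :=
  (forall x, E x -> Rle m x) /\
  (forall b, (forall x, E x -> Rle b x) -> Rle b m).

(* Main.v *)
Require Import Defs.
From Stdlib Require Import Reals.
From mathcomp Require Import all_boot.
From Stdlib Require Import Lra FunctionalExtensionality.
From mathcomp Require Import perm zify.

Set Implicit Arguments.
Unset Strict Implicit.

Lemma prod_cons (A : Type) (l : seq A) Ls :
  prod_lists (l :: Ls) = [seq x :: y | x <- l, y <- prod_lists Ls].
Proof. by []. Qed.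

Lemma size_prod (A : Type) (Ls : seq (seq A)) :
  size (prod_lists Ls) = \prod_(l <- Ls) size l.
Proof.
elim: Ls => [|l Ls IH]; first by rewrite big_nil.
by rewrite prod_cons size_allpairs big_cons IH.
Qed.

Lemma mem_prodP (A : eqType) (Ls : seq (seq A)) (s : seq A) x0 :
  reflect (size s = size Ls /\ forall i, i < size Ls -> nth x0 s i \in nth [::] Ls i)
          (s \in prod_lists Ls).
Proof.
elim: Ls s => [|l Ls IH] s.
  apply: (iffP idP) => [|[sz _]]; first by rewrite inE => /eqP ->.
  by case: s sz.
rewrite prod_cons; apply: (iffP allpairsP).
  move=> [[x y] /= [xl yL ->]].
  move/IH: yL => [sy Hy'].
  split; first by rewrite /= sy.
  by case=> [|i] //= /Hy'.
case: s => [|x y] [/= sz H] //.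
exists (x, y); split => //=.
  exact: (H 0).
apply/(IH y); split; first by case: sz.
by move=> i iL; have := H i.+1 iL.
Qed.

Lemma sum_prod_cat (A : Type) (As Bs : seq (seq A)) (F : seq A -> nat) :
  \sum_(s <- prod_lists (As ++ Bs)) F s =
  \sum_(a <- prod_lists As) \sum_(b <- prod_lists Bs) F (a ++ b).
Proof.
elim: As F => [|l As IH] F.
  by rewrite /= big_cons big_nil addn0.
rewrite cat_cons !prod_cons !big_allpairs_dep.
apply: eq_bigr => x _.
by rewrite IH.
Qed.

Lemma sum_cst (T : Type) (s : seq T) c : \sum_(y <- s) c = size s * c.
Proof. by elim: s => [|a s IH]; rewrite ?big_nil ?big_cons ?IH ?mulSn. Qed.

Lemma sum_marginal (A : Type) (Ls : seq (seq A)) (G : A -> nat) (x0 : A) i :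
  i < size Ls ->
  (\sum_(c <- prod_lists Ls) G (nth x0 c i)) * size (nth [::] Ls i) =
  size (prod_lists Ls) * \sum_(x <- nth [::] Ls i) G x.
Proof.
elim: Ls i => [|l Ls IH] [|i] //= iL.
  rewrite big_allpairs_dep /= size_allpairs.
  under eq_bigr do rewrite sum_cst.
  rewrite -big_distrr /= mulnC mulnA; congr (_ * _); apply: mulnC.
rewrite big_allpairs_dep /= size_allpairs.
by rewrite sum_cst -mulnA IH // mulnA.
Qed.

Definition coord (b : bool) (p : nat * nat) : nat := if b then p.2 else p.1.

Lemma lexenum_perm a (A : {set 'I_a * 'I_a}) :
  perm_eq (lexenum A) [seq (nat_of_ord x.1, nat_of_ord x.2) | x <- enum A].
Proof. by rewrite /lexenum perm_sort. Qed.

Lemma pairval_inj a : injective (fun x : 'I_a * 'I_a => (nat_of_ord x.1, nat_of_ord x.2)).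
Proof.
move=> [x1 x2] [y1 y2] /= [] /val_inj -> /val_inj -> //.
Qed.

Lemma lexenum_props a (A : {set 'I_a * 'I_a}) :
  [/\ uniq (lexenum A), size (lexenum A) = #|A| &
      all (fun p => (p.1 < a) && (p.2 < a)) (lexenum A)].
Proof.
have P := lexenum_perm A.
split.
- rewrite (perm_uniq P) map_inj_uniq ?enum_uniq //; exact: pairval_inj.
- by rewrite (perm_size P) size_map cardE.
- rewrite (perm_all _ P) all_map; apply/allP => x _ /=.
  by rewrite !ltn_ord.
Qed.

Lemma level_valid k i l : l \in level_outcomes k i ->
  [/\ uniq l, size l = k i & all (fun p => (p.1 < k i.-1) && (p.2 < k i.-1)) l].
Proof.
move=> /mapP [A]; rewrite mem_enum inE => /eqP cA ->.
by have [u s a] := lexenum_props A; rewrite s cA.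
Qed.

Lemma size_level k i :
  size (level_outcomes k i) = 'C(k i.-1 * k i.-1, k i).
Proof.
by rewrite /level_outcomes size_map -cardE card_draws card_prod card_ord.
Qed.

Lemma level_unif k i b (G : nat -> nat) : 0 < k i.-1 ->
  (\sum_(l <- level_outcomes k i) \sum_(y <- iota 0 (k i)) G (coord b (nth (0, 0) l y))) * k i.-1 =
  size (level_outcomes k i) * k i * \sum_(x <- iota 0 (k i.-1)) G x.
Proof.
set a := k i.-1.
set H := fun x : 'I_a * 'I_a => G (coord b (nat_of_ord x.1, nat_of_ord x.2)).
set S := [set A : {set 'I_a * 'I_a} | #|A| == k i].
set Nc := fun x : 'I_a * 'I_a => \sum_(A in S) (x \in A : nat).
have Step1 : forall A : {set 'I_a * 'I_a}, A \in S ->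
   \sum_(y <- iota 0 (k i)) G (coord b (nth (0, 0) (lexenum A) y)) = \sum_(x in A) H x.
  move=> A; rewrite inE => /eqP cA.
  have [_ sz _] := lexenum_props A; rewrite -cA -sz -(big_enum _ _ A) /H.
  rewrite -(big_map (fun x : 'I_a * 'I_a => (nat_of_ord x.1, nat_of_ord x.2)) xpredT (fun p => G (coord b p))).
  rewrite -(perm_big _ (lexenum_perm A)).
  by rewrite (big_nth (0, 0)) /index_iota subn0.
have Step2 : \sum_(l <- level_outcomes k i) \sum_(y <- iota 0 (k i)) G (coord b (nth (0, 0) l y))
    = \sum_x Nc x * H x.
  rewrite /level_outcomes big_map big_enum /=.
  transitivity (\sum_(A in S) \sum_x (x \in A : nat) * H x).
    apply: eq_bigr => A AS; rewrite Step1 // big_mkcond /=; apply: eq_bigr => x _.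
    by case: (x \in A); rewrite ?mul1n ?mul0n.
  rewrite exchange_big /=; apply: eq_bigr => x _.
  by rewrite /Nc big_distrl.
have Nconst : forall x x0, Nc x = Nc x0.
  move=> x x0.
  rewrite /Nc (reindex_inj (imset_inj (@perm_inj _ (tperm x x0)))) /=.
  apply: eq_big => A.
    by rewrite !inE card_imset //; exact: perm_inj.
  by move=> _; rewrite -{1}(tpermR x x0) mem_imset //; exact: perm_inj.
move=> a0.
set N0 := Nc (Ordinal a0, Ordinal a0).
have SumG : \sum_x H x = a * \sum_(y <- iota 0 a) G y.
  rewrite /H -(pair_big xpredT xpredT (fun x1 x2 : 'I_a => G (coord b (nat_of_ord x1, nat_of_ord x2)))) /=.
  have E : \sum_(y <- iota 0 a) G y = \sum_(y < a) G y by rewrite -(big_mkord xpredT) /index_iota subn0.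
  rewrite E; clear Step1 Step2 Nconst N0 Nc S H; case: b.
    rewrite exchange_big /=.
    rewrite (eq_bigr (fun j : 'I_a => a * G j)) ?big_distrr //.
    by move=> j _; rewrite /coord /= big_const_ord iter_addn_0 mulnC.
  rewrite (eq_bigr (fun j : 'I_a => a * G j)) ?big_distrr //.
  by move=> j _; rewrite /coord /= big_const_ord iter_addn_0 mulnC.
have Step4 : \sum_x Nc x * H x = N0 * (a * \sum_(y <- iota 0 a) G y).
  rewrite -SumG big_distrr; apply: eq_bigr => x _; by rewrite (Nconst x (Ordinal a0, Ordinal a0)).
have Step5 : size (level_outcomes k i) * k i = a * a * N0.
  rewrite /level_outcomes size_map -cardE -sum_nat_const.
  transitivity (\sum_(A in S) \sum_x (x \in A : nat)).
    apply: eq_bigr => A; rewrite inE => /eqP <-.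
    by rewrite -sum1_card big_mkcond.
  rewrite exchange_big /=.
  rewrite (eq_bigr (fun _ => N0)); first by rewrite sum_nat_const card_prod card_ord mulnC.
  by move=> x _; have := Nconst x (Ordinal a0, Ordinal a0).
rewrite Step2 Step4 Step5.
set s := \sum_(y <- iota 0 a) G y; lia.
Qed.

Fixpoint bitsof (m r : nat) : seq bool :=
  match m with 0 => [::] | m'.+1 => odd r :: bitsof m' r./2 end.

Fixpoint descL (bits : seq bool) (s : seq (seq (nat * nat))) (c : nat) : nat :=
  match bits with
  | [::] => c
  | b :: bs => coord b (nth (0, 0) (head [::] s) (descL bs (behead s) c))
  end.

Lemma size_Ystr Ls n j : size (Ystr Ls n j) = 2 ^ n.
Proof.
elim: n j => [|n IH] j //=.
by rewrite size_cat !IH expnS mul2n addnn.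
Qed.

Lemma Ystr_ext Ls Ls' n j : (forall i, i < n -> nth [::] Ls i = nth [::] Ls' i) ->
  Ystr Ls n j = Ystr Ls' n j.
Proof.
elim: n j => [|n IH] j H //=.
rewrite H // !IH //; by move=> i ilt; apply: H; apply: ltnW.
Qed.

Lemma drop_head_behead (T : Type) (s : seq (seq T)) n :
  head [::] (drop n s) = nth [::] s n /\ behead (drop n s) = drop n.+1 s.
Proof.
elim: s n => [|a s IH] [|n] //=; by rewrite drop0.
Qed.

Lemma nth_Ystr Ls m : forall n r q c, r < 2 ^ m -> q < 2 ^ n ->
  nth 0 (Ystr Ls (n + m) c) (r * 2 ^ n + q) =
  nth 0 (Ystr Ls n (descL (bitsof m r) (drop n Ls) c)) q.
Proof.
elim: m => [|m IH] n r q c rlt qlt.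
  by move: rlt; rewrite expn0 ltnS leqn0 => /eqP ->; rewrite addn0.
have E : r * 2 ^ n + q = r./2 * 2 ^ n.+1 + (odd r * 2 ^ n + q).
  rewrite -{1}(odd_double_half r) expnS; lia.
have r2 : r./2 < 2 ^ m.
  move: rlt; rewrite expnS -{1}(odd_double_half r); lia.
have q2 : odd r * 2 ^ n + q < 2 ^ n.+1.
  rewrite expnS; case: (odd r) => /=; lia.
rewrite addnS -addSn E IH // /=.
have [Eh Eb] := drop_head_behead Ls n.
rewrite Eh Eb nth_cat size_Ystr.
case: (odd r) => /=.
  by rewrite mul1n ltnNge leq_addr /= addKn.
by rewrite mul0n add0n qlt.
Qed.

Lemma sumn_pow2 i : sumn [seq 2 ^ i' | i' <- iota 0 i] = (2 ^ i).-1.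
Proof.
elim: i => [|i IH] //.
rewrite -[i.+1]addn1 iotaD map_cat sumn_cat IH /= add0n addn0 expnD expn1.
have := expn_gt0 2 i; lia.
Qed.

Lemma Xprefix_nth M w i q : i <= M -> q < 2 ^ i ->
  nth 0 (Xprefix M w) ((2 ^ i).-1 + q) = nth 0 (Ystr w.1 i (nth 0 w.2 i)) q.
Proof.
move=> iM qlt.
rewrite /Xprefix (_ : M.+1 = i + (M.+1 - i)); last by lia.
rewrite iotaD map_cat flatten_cat nth_cat.
have Sz : size (flatten [seq Ystr w.1 i0 (nth 0 w.2 i0) | i0 <- iota 0 i]) = (2 ^ i).-1.
  rewrite size_flatten /shape -map_comp -sumn_pow2; congr sumn.
  by apply: eq_map => x /=; rewrite size_Ystr.
rewrite Sz ltnNge leq_addr /= addKn add0n.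
rewrite (_ : M.+1 - i = (M - i).+1); last by lia.
by rewrite /= nth_cat size_Ystr qlt.
Qed.

Lemma Xblock_desc M n j w m r : j = 2 ^ m + r -> r < 2 ^ m -> n + m <= M ->
  Xblock M n j w = Ystr w.1 n (descL (bitsof m r) (drop n w.1) (nth 0 w.2 (n + m))).
Proof.
move=> -> rlt nmM.
rewrite /Xblock.
set Y := Ystr w.1 n _.
rewrite -[RHS](mkseq_nth 0) size_Ystr /mkseq.
rewrite -[in iota _ _](addn0 ((2 ^ m + r) * 2 ^ n)) iotaDl -map_comp.
apply/eq_in_map => q; rewrite mem_iota add0n => /andP [_ qlt] /=.
have -> : ((2 ^ m + r) * 2 ^ n + q).-1 = (2 ^ (n + m)).-1 + (r * 2 ^ n + q).
  rewrite expnD mulnDl (mulnC (2 ^ m)); have := expn_gt0 2 (n + m); rewrite expnD; lia.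
rewrite Xprefix_nth //; last first.
  rewrite expnD (mulnC (2 ^ n)).
  apply: (@leq_trans ((r.+1) * 2 ^ n)); first by rewrite mulSn; lia.
  by rewrite leq_mul2r rlt orbT.
by rewrite nth_Ystr.
Qed.

Lemma Ystr_blocks Ls m0 t d :
  Ystr Ls (m0 + t) d =
  mkseq (fun x => nth 0 (Ystr Ls m0 (descL (bitsof t (x %/ 2 ^ m0)) (drop m0 Ls) d)) (x %% 2 ^ m0))
        (2 ^ (m0 + t)).
Proof.
rewrite -[LHS](mkseq_nth 0) size_Ystr.
rewrite /mkseq; apply/eq_in_map => x; rewrite mem_iota add0n expnD => /andP [_ xlt] /=.
have p0 : 0 < 2 ^ m0 by rewrite expn_gt0.
rewrite {1}(divn_eq x (2 ^ m0)) nth_Ystr ?ltn_pmod //.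
by rewrite ltn_divLR // mulnC.
Qed.

Definition lvls (k : nat -> nat) n p := [seq level_outcomes k i | i <- iota n.+1 p].

Lemma unif_levels k (kpos : forall n, 0 < k n) bits : forall n p (G : nat -> nat),
  size bits <= p ->
  (\sum_(s <- prod_lists (lvls k n p)) \sum_(c <- iota 0 (k (n + size bits))) G (descL bits s c)) * k n =
  size (prod_lists (lvls k n p)) * k (n + size bits) * \sum_(x <- iota 0 (k n)) G x.
Proof.
elim: bits => [|b bs IH] n p G /=.
  move=> _; rewrite addn0 sum_cst; lia.
case: p => [|p] //; rewrite ltnS => bsp.
rewrite (_ : lvls k n p.+1 = level_outcomes k n.+1 :: lvls k n.+1 p) // prod_cons big_allpairs_dep size_allpairs /=.
set G' := fun y => \sum_(s1 <- level_outcomes k n.+1) G (coord b (nth (0, 0) s1 y)).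
have E : \sum_(i1 <- level_outcomes k n.+1) \sum_(i2 <- prod_lists (lvls k n.+1 p))
    \sum_(c <- iota 0 (k (n + (size bs).+1))) G (coord b (nth (0, 0) i1 (descL bs i2 c)))
  = \sum_(s' <- prod_lists (lvls k n.+1 p)) \sum_(c <- iota 0 (k (n.+1 + size bs))) G' (descL bs s' c).
  rewrite exchange_big /=; apply: eq_bigr => s' _.
  rewrite exchange_big /= addnS -addSn; apply: eq_bigr => c _.
  by [].
rewrite E.
have Hl := @level_unif k n.+1 b G (kpos _).
have HI := IH n.+1 p G' bsp.
have HG : \sum_(y <- iota 0 (k n.+1)) G' y =
   \sum_(s1 <- level_outcomes k n.+1) \sum_(y <- iota 0 (k n.+1)) G (coord b (nth (0, 0) s1 y)).
  by rewrite exchange_big.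
rewrite HG /= in HI.
apply/eqP; rewrite -(eqn_pmul2r (kpos n.+1)); apply/eqP.
rewrite addnS -addSn.
set S := \sum_(s' <- _) _ in HI *.
set T := \sum_(s1 <- _) _ in Hl HI.
set U := \sum_(x <- _) _ in Hl *.
rewrite /= in Hl; rewrite mulnAC HI -!mulnA Hl; lia.
Qed.

Definition lvl_ok (k : nat -> nat) i (l : seq (nat * nat)) :=
  [/\ uniq l, size l = k i.+1 & all (fun p => (p.1 < k i) && (p.2 < k i)) l].

Lemma Ystr_inj k Ls n : (forall i, i < n -> lvl_ok k i (nth [::] Ls i)) ->
  forall y y', y < k n -> y' < k n -> Ystr Ls n y = Ystr Ls n y' -> y = y'.
Proof.
elim: n => [|n IH] H y y' yl y'l /=; first by case.
have [u sz al] := H n (ltnSn n).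
have H' : forall i, i < n -> lvl_ok k i (nth [::] Ls i) by move=> i il; apply: H; apply: ltnW.
move/eqP; rewrite eqseq_cat ?size_Ystr // => /andP [/eqP E1 /eqP E2].
have inl : forall z, z < k n.+1 -> (nth (0, 0) (nth [::] Ls n) z).1 < k n /\ (nth (0, 0) (nth [::] Ls n) z).2 < k n.
  move=> z zl; have : nth (0, 0) (nth [::] Ls n) z \in nth [::] Ls n by rewrite mem_nth // sz.
  by move/(allP al)/andP.
have [a1 a2] := inl y yl; have [b1 b2] := inl y' y'l.
have P1 := IH H' _ _ a1 b1 E1.
have P2 := IH H' _ _ a2 b2 E2.
have Ep : nth (0, 0) (nth [::] Ls n) y = nth (0, 0) (nth [::] Ls n) y'.
  by move: P1 P2; case: (nth _ _ y) => ??; case: (nth _ _ y') => ?? /= -> ->.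
by apply/eqP; rewrite -(nth_uniq (0, 0) _ _ u) ?sz // Ep.
Qed.

Lemma count_inj_le1 (T : eqType) (g : nat -> T) K v :
  (forall y y', y < K -> y' < K -> g y = g y' -> y = y') ->
  count (fun y => g y == v) (iota 0 K) <= 1.
Proof.
move=> inj.
rewrite -size_filter.
set f := filter _ _.
have u : uniq (map g f).
  rewrite map_inj_in_uniq ?filter_uniq ?iota_uniq //.
  move=> y y'; rewrite !mem_filter !mem_iota /= add0n => /andP [_ yl] /andP [_ y'l].
  exact: inj.
have sub : {subset map g f <= [:: v]}.
  move=> z /mapP [y]; rewrite mem_filter => /andP [/eqP <- _] ->; by rewrite inE.
by rewrite -(size_map g); apply: (uniq_leq_size u sub).
Qed.

Lemma descL_lt k (kpos : forall n, 0 < k n) bits : forall n s c,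
  (forall i, i < size bits -> all (fun p => (p.1 < k (n + i)) && (p.2 < k (n + i))) (nth [::] s i)) ->
  c < k (n + size bits) -> descL bits s c < k n.
Proof.
case: bits => [|b bs] n s c H cl /=; first by rewrite addn0 in cl.
set d := descL _ _ _.
case: (ltnP d (size (head [::] s))) => dl.
  have : nth (0, 0) (head [::] s) d \in nth [::] s 0 by rewrite (_ : nth [::] s 0 = head [::] s) ?mem_nth //; case: (s).
  move/(allP (H 0 isT)); rewrite addn0 => /andP [h1 h2].
  by rewrite /coord; case: (b).
by rewrite nth_default // /coord; case: (b).
Qed.

Lemma size_bitsof m r : size (bitsof m r) = m.
Proof. by elim: m r => [|m IH] r //=; rewrite IH. Qed.

Lemma count_sum (T : Type) (P : pred T) (s : seq T) : count P s = \sum_(x <- s) (P x : nat).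
Proof. by elim: s => [|a s IH]; rewrite ?big_nil ?big_cons //= IH. Qed.

Definition SLs (k : nat -> nat) M := [seq level_outcomes k i | i <- iota 1 M].
Definition CLs (k : nat -> nat) M := [seq iota 0 (k i) | i <- iota 0 M.+1].

Lemma Omega_sum k M (F : outcome -> nat) :
  \sum_(w <- Omega k M) F w = \sum_(s <- prod_lists (SLs k M)) \sum_(c <- prod_lists (CLs k M)) F (s, c).
Proof. by rewrite /Omega big_allpairs. Qed.

Lemma size_Omega k M : size (Omega k M) = size (prod_lists (SLs k M)) * size (prod_lists (CLs k M)).
Proof. by rewrite /Omega size_allpairs. Qed.

Lemma SLs_split k n j : SLs k (n + j) = SLs k n ++ lvls k n j.
Proof. by rewrite /SLs /lvls iotaD map_cat add1n. Qed.

Lemma nth_CLs k M i : i <= M -> nth [::] (CLs k M) i = iota 0 (k i).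
Proof.
move=> iM; rewrite /CLs (nth_map 0) ?size_iota // nth_iota //.
Qed.

Lemma count_bound k (kpos : forall n, 0 < k n) n j v : 1 <= j ->
  count (fun w => Xblock (n + j) n j w == v) (Omega k (n + j)) * k n <= size (Omega k (n + j)).
Proof.
move=> j1.
have /andP [hm1 hm2] := @trunc_log_bounds 2 j isT j1.
set m := trunc_log 2 j in hm1 hm2 *.
set r := j - 2 ^ m.
have Ej : j = 2 ^ m + r by rewrite /r; lia.
have rlt : r < 2 ^ m by move: hm2; rewrite expnS /r; lia.
have mj : m <= j by apply: leq_trans hm1; apply: ltnW; apply: ltn_expl.
set bits := bitsof m r.
have sb : size bits = m by rewrite size_bitsof.
set A := SLs k n.
set B := lvls k n j.
set CL := CLs k (n + j).
rewrite count_sum Omega_sum SLs_split sum_prod_cat -/A -/B -/CL.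
rewrite size_Omega SLs_split size_prod big_cat /= -!size_prod -/A -/B -/CL.
rewrite big_distrl /= -mulnA -sum_cst.
rewrite !big_seq; apply: leq_sum => s1 s1A.
have [sz1 Hs1] := (elimT (mem_prodP A s1 [::])) s1A.
rewrite size_map size_iota in sz1.
set G := fun y => (Ystr s1 n y == v : nat).
have E1 : forall s2 c, Xblock (n + j) n j (s1 ++ s2, c) = Ystr s1 n (descL bits s2 (nth 0 c (n + m))).
  move=> s2 c; rewrite (@Xblock_desc _ _ _ _ m r) //= ?leq_add2l //.
  rewrite drop_size_cat //; apply: Ystr_ext => i il; rewrite nth_cat sz1 il //.
under eq_bigr do under eq_bigr do rewrite E1.
set Inner := \sum_(s2 <- _) _.
have E2 : Inner = \sum_(c <- prod_lists CL) (fun x => \sum_(s2 <- prod_lists B) G (descL bits s2 x)) (nth 0 c (n + m)).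
  by rewrite /Inner exchange_big.
have M1 := @sum_marginal _ CL (fun x => \sum_(s2 <- prod_lists B) G (descL bits s2 x)) 0 (n + m).
have M1h : n + m < size CL by rewrite /CL /CLs size_map size_iota ltnS leq_add2l.
move: (M1 M1h) => M1'.
rewrite nth_CLs ?leq_add2l // size_iota in M1'.
have M2 := @unif_levels k kpos bits n j G.
rewrite sb in M2.
have M3 : \sum_(x <- iota 0 (k (n + m))) \sum_(s2 <- prod_lists B) G (descL bits s2 x) =
          \sum_(s2 <- prod_lists B) \sum_(x <- iota 0 (k (n + m))) G (descL bits s2 x).
  by rewrite exchange_big.
have C1 : \sum_(x <- iota 0 (k n)) G x <= 1.
  rewrite /G -count_sum; apply: count_inj_le1.
  apply: Ystr_inj => i il.
  have := Hs1 i; rewrite size_map size_iota => /(_ il).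
  rewrite /A /SLs (nth_map 0) ?size_iota // nth_iota // add1n.
  by move/level_valid => [u s a]; split.
rewrite (_ : size [seq _ | _ <- _, _ <- _] = size (prod_lists CL)) //.
rewrite -(leq_pmul2r (kpos (n + m))) mulnAC E2 M1' M3 -mulnA (M2 mj).
apply: leq_trans (leq_mul (leqnn _) (leq_mul (leqnn _) C1)) _.
rewrite muln1; set x := size (prod_lists CL); set y := size (prod_lists B); lia.
Qed.

Lemma prod_take (T : eqType) (As Bs : seq (seq T)) s :
  s \in prod_lists (As ++ Bs) -> take (size As) s \in prod_lists As.
Proof.
elim: As s => [|l As IH] s /=.
  by rewrite take0 inE.
move=> /allpairsP [[x y] /= [xl yin ->]] /=.
by apply/allpairsP; exists (x, take (size As) y); split => //; apply: IH.
Qed.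

Lemma size_prod_nseq (T : Type) a (L : seq T) : size (prod_lists (nseq a L)) = size L ^ a.
Proof. by elim: a => [|a IH] //=; rewrite size_allpairs IH expnS. Qed.

Lemma undup_map_le (T U : eqType) (F : T -> U) (s : seq T) :
  size (undup (map F s)) <= size (undup s).
Proof.
rewrite -(size_map F (undup s)); apply: uniq_leq_size; first exact: undup_uniq.
move=> y; rewrite mem_undup => /mapP [x xs ->]; apply: map_f; by rewrite mem_undup.
Qed.

Lemma Omega_valid k M w : w \in Omega k M ->
  (forall i, i < M -> all (fun p => (p.1 < k i) && (p.2 < k i)) (nth [::] w.1 i)) /\
  (forall i, i <= M -> nth 0 w.2 i < k i) /\ w.1 \in prod_lists (SLs k M).
Proof.
move=> /allpairsP [[s c] /= [sin cin ->]] /=.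
split; last split => //.
  move=> i iM; move/(mem_prodP _ _ [::]): sin => [sz H].
  have := H i; rewrite /SLs size_map size_iota (nth_map 0) ?size_iota // nth_iota // add1n => /(_ iM).
  by move/level_valid => [_ _ a].
move=> i iM; have [sz H] := elimT (@mem_prodP _ (CLs k M) c 0) cin.
have := H i; rewrite /CLs size_map size_iota (nth_map 0) ?size_iota // nth_iota // add0n.
by move=> /(_ iM); rewrite mem_iota.
Qed.

Lemma distinct_bound k (kpos : forall n, 0 < k n) n j m0 t : 1 <= j -> n = m0 + t ->
  size (undup (map (Xblock (n + j) n j) (Omega k (n + j)))) <=
  size (prod_lists (SLs k m0)) * k m0 ^ (2 ^ t).
Proof.
move=> j1 En.
have /andP [hm1 hm2] := @trunc_log_bounds 2 j isT j1.
set m := trunc_log 2 j in hm1 hm2 *.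
set r := j - 2 ^ m.
have Ej : j = 2 ^ m + r by rewrite /r; lia.
have rlt : r < 2 ^ m by move: hm2; rewrite expnS /r; lia.
have mj : m <= j by apply: leq_trans hm1; apply: ltnW; apply: ltn_expl.
set bits := bitsof m r.
set d := fun w : outcome => descL bits (drop n w.1) (nth 0 w.2 (n + m)).
set g := fun w : outcome => (take m0 w.1, [seq descL (bitsof t q) (drop m0 w.1) (d w) | q <- iota 0 (2 ^ t)]).
set F := fun p : seq (seq (nat * nat)) * seq nat =>
  mkseq (fun x => nth 0 (Ystr p.1 m0 (nth 0 p.2 (x %/ 2 ^ m0))) (x %% 2 ^ m0)) (2 ^ (m0 + t)).
have Ef : forall w, Xblock (n + j) n j w = F (g w).
  move=> w; rewrite (@Xblock_desc _ _ _ _ m r) //= ?leq_add2l // -/(d w) En Ystr_blocks.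
  rewrite /F /g /mkseq /=; apply/eq_in_map => x; rewrite mem_iota add0n expnD => /andP [_ xlt].
  have xq : x %/ 2 ^ m0 < 2 ^ t by rewrite ltn_divLR ?expn_gt0 // mulnC.
  rewrite (nth_map 0) ?size_iota // nth_iota // add0n.
  congr nth; apply: Ystr_ext => i il; by rewrite nth_take.
rewrite (eq_map Ef) map_comp.
apply: leq_trans (undup_map_le _ _) _.
set T := [seq (a, b) | a <- prod_lists (SLs k m0), b <- prod_lists (nseq (2 ^ t) (iota 0 (k m0)))].
have -> : size (prod_lists (SLs k m0)) * k m0 ^ (2 ^ t) = size T.
  by rewrite /T size_allpairs size_prod_nseq size_iota.
apply: uniq_leq_size; first exact: undup_uniq.
move=> p; rewrite mem_undup => /mapP [w win ->].
have [V1 [V2 V3]] := Omega_valid win.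
apply/allpairsP; exists (g w); split => //=.
  have := V3; rewrite (_ : n + j = m0 + (t + j)); last by lia.
  rewrite /SLs iotaD map_cat.
  by move/prod_take; rewrite size_map size_iota.
apply/(@mem_prodP _ (nseq (2 ^ t) (iota 0 (k m0))) _ 0); rewrite size_map size_iota size_nseq; split => // q qlt.
rewrite nth_nseq qlt mem_iota add0n (nth_map 0) ?size_iota // nth_iota // add0n.
apply: descL_lt => //.
  move=> i; rewrite size_bitsof => il; rewrite nth_drop; apply: V1; lia.
rewrite size_bitsof -En.
apply: descL_lt => //.
  move=> i; rewrite size_bitsof => il; rewrite nth_drop; apply: V1; lia.
rewrite size_bitsof; apply: V2; lia.
Qed.

Lemma prod_size_gt0 (T : eqType) (Ls : seq (seq T)) :
  (forall l, l \in Ls -> 0 < size l) -> 0 < size (prod_lists Ls).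
Proof.
rewrite size_prod; elim: Ls => [|l Ls IH] H; first by rewrite big_nil.
rewrite big_cons muln_gt0 H ?inE ?eqxx //=.
by apply: IH => l' Hl'; apply: H; rewrite inE Hl' orbT.
Qed.

Lemma Omega_pos k (kpos : forall n, 0 < k n) (ksq : forall n, k n.+1 <= k n * k n) M :
  0 < size (Omega k M).
Proof.
rewrite size_Omega muln_gt0; apply/andP; split; apply: prod_size_gt0 => l.
  move=> /mapP [i iin ->].
  rewrite size_level bin_gt0.
  move: iin; rewrite mem_iota; case: i => [|i] //= _; exact: ksq.
move=> /mapP [i _ ->]; by rewrite size_iota.
Qed.

Lemma SLs_pos k (ksq : forall n, k n.+1 <= k n * k n) M : 0 < size (prod_lists (SLs k M)).
Proof.
apply: prod_size_gt0 => l /mapP [i iin ->].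
rewrite size_level bin_gt0.
move: iin; rewrite mem_iota; case: i => [|i] //= _; exact: ksq.
Qed.

Unset Implicit Arguments.

Local Open Scope R_scope.


Definition rsum (s : seq R) : R := foldr Rplus R0 s.

Lemma rsum_le (T : eqType) (s : seq T) (g h : T -> R) :
  (forall x, x \in s -> g x <= h x) -> rsum (map g s) <= rsum (map h s).
Proof.
elim: s => [|a s IH] H /=; first lra.
apply: Rplus_le_compat; first by apply: H; rewrite inE eqxx.
by apply: IH => x xs; apply: H; rewrite inE xs orbT.
Qed.

Lemma rsum_const (T : Type) (s : seq T) (a : R) :
  rsum (map (fun _ => a) s) = INR (size s) * a.
Proof.
elim: s => [|b s IH]; first by rewrite /=; lra.
rewrite (_ : size (b :: s) = (size s).+1) // S_INR Rmult_plus_distr_r -IH /rsum /=; lra.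
Qed.

Lemma rsum_plus (T : Type) (s : seq T) (g h : T -> R) :
  rsum (map (fun x => g x + h x) s) = rsum (map g s) + rsum (map h s).
Proof. elim: s => [|b s IH]; rewrite /rsum /= -?/(rsum _) ?IH; lra. Qed.

Lemma rsum_scale (T : Type) (s : seq T) (g : T -> R) (a : R) :
  rsum (map (fun x => a * g x) s) = a * rsum (map g s).
Proof. elim: s => [|b s IH]; rewrite /rsum /= -?/(rsum _) ?IH; lra. Qed.

Lemma rsum_ext (T : eqType) (s : seq T) (g h : T -> R) :
  (forall x, x \in s -> g x = h x) -> rsum (map g s) = rsum (map h s).
Proof.
move=> H; apply: Rle_antisym; apply: rsum_le => x xs; rewrite H //; lra.
Qed.

Lemma rsum_shift (T : eqType) (u s : seq T) a (F : T -> R) : uniq u ->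
  rsum [seq INR (count_mem y (a :: s)) * F y | y <- u] =
  rsum [seq INR (count_mem y s) * F y | y <- u] + (if a \in u then F a else 0).
Proof.
have Hc : forall y, count_mem y (a :: s) = ((a == y) + count_mem y s)%N by [].
elim: u => [|y u IH]; first by rewrite /rsum /=; lra.
move=> /andP [yu uu].
rewrite (_ : rsum _ = INR (count_mem y (a :: s)) * F y +
   rsum [seq INR (count_mem y (a :: s)) * F y | y <- u]) //.
rewrite (_ : rsum [seq INR (count_mem y0 s) * F y0 | y0 <- y :: u] = INR (count_mem y s) * F y +
   rsum [seq INR (count_mem y s) * F y | y <- u]) //.
rewrite IH // inE Hc plus_INR.
case: (eqVneq a y) => [ay|ay]; first subst a.
  rewrite (negbTE yu) orTb; change (INR true) with 1; lra.
rewrite orFb; change (INR false) with 0; lra.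
Qed.

Lemma rsum_group (T : eqType) (s : seq T) (F : T -> R) :
  rsum (map F s) = rsum [seq INR (count_mem y s) * F y | y <- undup s].
Proof.
elim: s => [|a s IH] //=.
case: ifP => as_.
  rewrite rsum_shift ?undup_uniq // mem_undup as_ -IH /rsum /=; lra.
rewrite (_ : rsum [seq _ | y <- a :: undup s] = INR ((a==a) + count_mem a s) * F a
  + rsum [seq INR ((a == y) + count_mem y s) * F y | y <- undup s]) //.
have -> : count_mem a s = 0%N.
  by apply/eqP; rewrite -leqn0 leqNgt -has_count has_pred1 as_.
rewrite [X in _ = _ + X](@rsum_ext _ _ _ (fun y => INR (count_mem y s) * F y)).
  rewrite -IH eqxx; change (INR (true + 0)) with 1; lra.
move=> y; rewrite mem_undup => ys.
have -> : (a == y) = false by apply/negP => /eqP ay; rewrite ay ys in as_.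
by [].
Qed.

Lemma ln_le_xm1 x : 0 < x -> ln x <= x - 1.
Proof. move=> x0; have := exp_ineq1_le (ln x); rewrite exp_ln //; lra. Qed.

Lemma ln_mono x y : 0 < x -> x <= y -> ln x <= ln y.
Proof.
move=> x0 [xy|->]; last lra.
by apply: Rlt_le; apply: ln_increasing.
Qed.

Lemma ln_bound (c N D : R) : 0 < c -> 0 < N -> 0 < D ->
  c * / N * - ln (c / N) <= c / N * ln D + / D - c / N.
Proof.
move=> c0 N0 D0.
have H : ln (N / (D * c)) <= N / (D * c) - 1.
  apply: ln_le_xm1; apply: Rdiv_lt_0_compat => //; nra.
have E : - ln (c / N) = ln D + ln (N / (D * c)).
  rewrite -ln_mult //; last by apply: Rdiv_lt_0_compat => //; nra.
  rewrite -ln_Rinv; last by apply: Rdiv_lt_0_compat.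
  congr ln; field; lra.
rewrite E.
have P : 0 <= c / N by apply: Rlt_le; apply: Rdiv_lt_0_compat.
have := Rmult_le_compat_l _ _ _ P H.
have -> : c / N * (N / (D * c) - 1) = / D - c / N by field; lra.
unfold Rdiv; lra.
Qed.

Lemma entropy_ge (A : eqType) (Om : seq outcome) (f : outcome -> A) (K : nat) :
  (0 < K)%N -> (0 < size Om)%N ->
  (forall w, w \in Om -> (count (fun w' => f w' == f w) Om * K <= size Om)%N) ->
  ln (INR K) <= entropy Om f.
Proof.
move=> K0 N0 H.
have N0' : 0 < INR (size Om) by apply: lt_0_INR; apply/ltP.
rewrite /entropy -/(rsum _).
apply: Rle_trans (@rsum_le _ _ (fun _ => / INR (size Om) * ln (INR K)) _ _).
  rewrite rsum_const -Rmult_assoc Rinv_r; [rewrite Rmult_1_l; apply: Rle_refl | apply: Rgt_not_eq; exact: N0'].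
move=> w wOm.
set c := count _ _.
have c0 : (0 < c)%N by rewrite -has_count; apply/hasP; exists w.
have c0' : 0 < INR c by apply: lt_0_INR; apply/ltP.
have K0' : 0 < INR K by apply: lt_0_INR; apply/ltP.
apply: Rmult_le_compat_l; first by left; apply: Rinv_0_lt_compat.
rewrite -ln_Rinv; last by apply: Rdiv_lt_0_compat.
apply: ln_mono => //.
have cK : INR c * INR K <= INR (size Om) by rewrite -mult_INR; apply: le_INR; apply/leP; apply: H.
rewrite (_ : / (INR c / INR (size Om)) = INR (size Om) / INR c); last by field; lra.
apply: (Rmult_le_reg_r (INR c)) => //.
rewrite (_ : INR (size Om) / INR c * INR c = INR (size Om)); last by field; lra.
lra.
Qed.

Lemma entropy_le (A : eqType) (Om : seq outcome) (f : outcome -> A) :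
  (0 < size Om)%N -> entropy Om f <= ln (INR (size (undup (map f Om)))).
Proof.
move=> N0.
have N0' : 0 < INR (size Om) by apply: lt_0_INR; apply/ltP.
set D := size _.
have D0 : (0 < D)%N.
  rewrite /D; case: (Om) N0 => // w Om' _.
  rewrite lt0n size_eq0; apply/eqP => E.
  have : f w \in undup (map f (w :: Om')) by rewrite mem_undup map_f // inE eqxx.
  by rewrite E.
have D0' : 0 < INR D by apply: lt_0_INR; apply/ltP.
set N := size Om.
set G := fun v => / INR N * - ln (INR (count_mem v (map f Om)) / INR N).
have E : entropy Om f = rsum (map G (map f Om)).
  rewrite /entropy -/(rsum _) -map_comp; congr rsum; apply: eq_map => w.
  by rewrite /G /= count_map.
set h := fun v => / INR N * ln (INR D) * INR (count_mem v (map f Om)) + / INR D - / INR N * INR (count_mem v (map f Om)).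
have Hle : forall v, v \in undup (map f Om) -> INR (count_mem v (map f Om)) * G v <= h v.
  move=> v vin.
  have c0 : (0 < count_mem v (map f Om))%N by rewrite -has_count has_pred1 -mem_undup.
  have c0' : 0 < INR (count_mem v (map f Om)) by apply: lt_0_INR; apply/ltP.
  rewrite /G /h /N.
  have := @ln_bound _ _ _ c0' N0' D0'.
  unfold Rdiv; lra.
rewrite E rsum_group.
apply: (Rle_trans _ _ _ (@rsum_le _ _ _ _ Hle)).
have S1 : rsum [seq INR (count_mem y (map f Om)) | y <- undup (map f Om)] = INR N.
  have := rsum_group _ (map f Om) (fun _ => 1).
  rewrite rsum_const size_map Rmult_1_r /N => ->.
  by congr rsum; apply: eq_map => y; rewrite Rmult_1_r.
rewrite (_ : h = fun v => (/ INR N * ln (INR D) * INR (count_mem v (map f Om)) + / INR D) + (- / INR N) * INR (count_mem v (map f Om))); last first.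
  by apply: functional_extensionality => v; rewrite /h; lra.
rewrite rsum_plus rsum_plus.
rewrite (rsum_scale _ _ (fun v => INR (count_mem v (map f Om)))).
rewrite (rsum_scale _ _ (fun v => INR (count_mem v (map f Om)))).
rewrite rsum_const -/D S1.
right; field; split; apply: Rgt_not_eq; [exact: N0' | exact: D0'].
Qed.


Lemma INR_pow2 t : INR (2 ^ t)%N = 2 ^ t.
Proof.
elim: t => [|t IH]; first by rewrite expn0 /=.
rewrite expnS mult_INR IH /=; lra.
Qed.

Lemma INR_pow (x t : nat) : INR (x ^ t)%N = INR x ^ t.
Proof.
elim: t => [|t IH]; first by rewrite expn0 /=.
by rewrite expnS mult_INR IH /=.
Qed.

Lemma INR_gt0 n : (0 < n)%N -> 0 < INR n.
Proof. by move=> h; apply: lt_0_INR; apply/ltP. Qed.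

Theorem proposition9 (k : nat -> nat)
  (kpos : forall n, (0 < k n)%N)
  (kmono : forall n, (k n <= k n.+1)%N)
  (ksq : forall n, (k n.+1 <= k n * k n)%N)
  (j : nat) (hj : (1 <= j)%N) :
  exists h : R,
    is_inf (fun x => exists l : nat, x = (ln (INR (k l)) / 2 ^ l)) h /\
    Un_cv (fun l => (ln (INR (k l)) / 2 ^ l)) h /\
    is_inf (fun x => exists n : nat, x = (H_block k n j / 2 ^ n)) h.
Proof.
set a := fun l => ln (INR (k l)) / 2 ^ l.
have kR : forall l, 1 <= INR (k l).
  by move=> l; apply: (le_INR 1); apply/leP; apply: kpos.
have lnk0 : forall l, 0 <= ln (INR (k l)).
  by move=> l; rewrite -ln_1; apply: ln_mono => //; lra.
have ppos : forall l, 0 < 2 ^ l by move=> l; apply: pow_lt; lra.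
have a0 : forall l, 0 <= a l.
  move=> l; rewrite /a; apply: Rmult_le_pos => //; left; apply: Rinv_0_lt_compat; apply: ppos.
have adec : Un_decreasing a.
  move=> l; rewrite /a.
  have H1 : ln (INR (k l.+1)) <= 2 * ln (INR (k l)).
    have -> : 2 * ln (INR (k l)) = ln (INR (k l * k l)) by rewrite mult_INR ln_mult; [lra| |]; apply: INR_gt0.
    apply: ln_mono; first by apply: INR_gt0.
    by apply: le_INR; apply/leP.
  have P := ppos l.
  rewrite (_ : 2 ^ l.+1 = 2 * 2 ^ l) // /Rdiv Rinv_mult.
  have Q : 0 < / 2 ^ l by apply: Rinv_0_lt_compat.
  unfold Rdiv; nra.
have alb : has_lb a.
  exists 0 => x [i ->]; rewrite /opp_seq; have := a0 i; lra.
have [h hcv] := decreasing_cv a adec alb.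
exists h.
have hle : forall l, h <= a l := decreasing_ineq a h adec hcv.
have hgreat : forall b, (forall l, b <= a l) -> b <= h.
  move=> b Hb; apply: Rnot_lt_le => hb.
  have [N HN] := hcv (b - h) ltac:(lra).
  have := HN N (le_n N); rewrite /R_dist => Hd.
  have := Hb N; have := Rabs_def2 _ _ Hd; lra.
split; [split|split].
- by move=> x [l ->]; apply: hle.
- by move=> b Hb; apply: hgreat => l; apply: Hb; exists l.
- exact: hcv.
have ppos' : forall l, 0 < / 2 ^ l by move=> l; apply: Rinv_0_lt_compat.
have Hge : forall n, a n <= H_block k n j / 2 ^ n.
  move=> n; rewrite /a /H_block.
  have E := entropy_ge _ (Omega k (n + j)) (Xblock (n + j) n j) (k n) (kpos n) (Omega_pos kpos ksq _)
     (fun w _ => count_bound kpos n (Xblock (n + j) n j w) hj).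
  unfold Rdiv; apply: Rmult_le_compat_r => //; left; apply: ppos'.
have Hub : forall m0 t, H_block k (m0 + t) j / 2 ^ (m0 + t) <=
    ln (INR (size (prod_lists (SLs k m0)))) / 2 ^ (m0 + t) + a m0.
  move=> m0 t; set n := (m0 + t)%N.
  have D1 := entropy_le _ (Omega k (n + j)) (Xblock (n + j) n j) (Omega_pos kpos ksq _).
  have Dle := @distinct_bound k kpos n j m0 t hj (erefl n).
  have D0 : (0 < size (undup [seq Xblock (n + j) n j i | i <- Omega k (n + j)]))%N.
    have := Omega_pos kpos ksq (n + j); case: (Omega k (n + j)) => // w Om _.
    rewrite lt0n size_eq0; apply/eqP => E.
    have : Xblock (n + j) n j w \in undup (map (Xblock (n + j) n j) (w :: Om)).
      by rewrite mem_undup inE eqxx.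
    by rewrite E.
  set D := size _ in D1 Dle D0.
  set S := size (prod_lists (SLs k m0)) in Dle *.
  have S0 : (0 < S)%N by apply: SLs_pos.
  have L1 : ln (INR D) <= ln (INR S) + 2 ^ t * ln (INR (k m0)).
    have LL := ln_mono _ _ (INR_gt0 _ D0) (le_INR _ _ (elimT leP Dle)).
    apply: (Rle_trans _ _ _ LL).
    rewrite mult_INR ln_mult; first last.
    - rewrite INR_pow; apply: pow_lt; apply: INR_gt0; apply: kpos.
    - by apply: INR_gt0.
    rewrite INR_pow ln_pow ?INR_pow2; [lra | apply: INR_gt0; apply: kpos].
  have HB : H_block k n j <= ln (INR S) + 2 ^ t * ln (INR (k m0)).
    rewrite /H_block; lra.
  rewrite /a /n pow_add.
  have P1 := ppos m0; have P2 := ppos t.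
  apply: Rle_trans (Rmult_le_compat_r (/ (2 ^ m0 * 2 ^ t)) _ _ _ HB) _.
    by left; apply: Rinv_0_lt_compat; apply: Rmult_lt_0_compat.
  right; field; lra.
split.
- move=> x [n ->]; exact: Rle_trans (hle n) (Hge n).
- move=> b Hb; apply: hgreat => m0.
  apply: Rnot_lt_le => hb.
  set S := size (prod_lists (SLs k m0)).
  have C0 : 0 <= ln (INR S).
    rewrite -ln_1; apply: ln_mono; first lra.
    by apply: (le_INR 1); apply/leP; apply: SLs_pos.
  set eps := b - a m0.
  have e0 : 0 < eps by rewrite /eps; lra.
  have [t Ht] := INR_unbounded (ln (INR S) / eps).
  have Pt : INR t < 2 ^ (m0 + t).
    apply: Rlt_le_trans (_ : INR (2 ^ t)%N <= _).
      by apply: lt_INR; apply/ltP; apply: ltn_expl.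
    rewrite INR_pow2 pow_add.
    have := ppos t; have : 1 <= 2 ^ m0 by apply: pow_R1_Rle; lra.
    nra.
  have L1 : ln (INR S) < eps * INR t.
    have : ln (INR S) / eps * eps < INR t * eps by apply: Rmult_lt_compat_r.
    rewrite (_ : ln (INR S) / eps * eps = ln (INR S)); last by field; lra.
    lra.
  have L2 : ln (INR S) < eps * 2 ^ (m0 + t) by nra.
  have key : ln (INR S) / 2 ^ (m0 + t) < eps.
    have P := ppos (m0 + t)%N.
    apply: (Rmult_lt_reg_r (2 ^ (m0 + t))) => //.
    rewrite (_ : ln (INR S) / 2 ^ (m0 + t) * 2 ^ (m0 + t) = ln (INR S)); last by field; lra.
    lra.
  have := Hb _ (ex_intro _ (m0 + t)%N erefl).
  have := Hub m0 t.
  rewrite -/S /eps in key *; lra.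
Qed.
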